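(* There exist instances of arbitrarily large size of scheduling a single job with a general DAG dependency graph such that the optimal makespan is $\Omega(\sqrt{\mu_j}(\Delta_j+T_j))$; that is, there is a constant $\kappa>0$ such that for arbitrarily large $\mu_j$ there is a single-job instance with $\mu_j$ coflows whose optimal makespan is at least $\kappa\sqrt{\mu_j}(\Delta_j+T_j)$.
   Context: Model. $m$ servers, each a sender and a receiver. A coflow is an $m\times m$ nonnegative integer matrix $(d_{sr})$ of unit packets from sender $s$ to receiver $r$. A job $j$ has $\mu_j$ coflows $\mathcal{D}^{(cj)}$ and a DAG $G_j$; edge $c_1\to c_2$ means no packet of $c_2$ is sent before all packets of $c_1$ are sent. Each slot, each sender sends at most one packet and each receiver receives at most one. The makespan of a feasible schedule is the end of its last used slot. Effective size of a coflow: $D=\max\{\max_s\sum_rd_{sr},\max_r\sum_sd_{sr}\}$. $\Delta_j$ is the effective size of $\sum_c\mathcal{D}^{(cj)}$; $T_j$ is the maximum over directed paths in $G_j$ of the sum of effective sizes of the coflows on the path. *)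

(* Defs.v *)
From mathcomp Require Import all_boot.
Set Implicit Arguments. Unset Strict Implicit. Unset Printing Implicit Defensive.

(* A single job: m servers, mu coflows, coflow c is the m x m nat matrix
   (fun s r => D c s r) of unit packets from sender s to receiver r;
   E is the edge relation of the dependency graph G_j on coflows. *)
#[local] Unset Implicit Arguments.
Record job := Job {
  nserv : nat;
  mu : nat;
  coflow : 'I_mu -> 'I_nserv -> 'I_nserv -> nat;
  dep : rel 'I_mu
}.
#[local] Set Implicit Arguments.

Definition is_dag (J : job) : Prop :=
  forall c1 c2 : 'I_(mu J), dep J c1 c2 -> ~~ connect (dep J) c2 c1.

Definition coflows_nonempty (J : job) : Prop :=
  forall c : 'I_(mu J), exists s r, 0 < coflow J c s r.

Definition eff_size (m : nat) (d : 'I_m -> 'I_m -> nat) : nat :=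
  maxn (\max_(s < m) \sum_(r < m) d s r) (\max_(r < m) \sum_(s < m) d s r).

Definition Delta_j (J : job) : nat :=
  eff_size (fun s r => \sum_(c < mu J) coflow J c s r).

Definition ceff (J : job) (c : 'I_(mu J)) : nat := eff_size (coflow J c).

(* In a DAG every
   directed path has at most mu vertices, i.e. k < mu edges. *)
Definition T_j (J : job) : nat :=
  \max_(k < mu J) \max_(c0 : 'I_(mu J))
     \max_(t : k.-tuple 'I_(mu J) | path (dep J) c0 t)
        (ceff c0 + \sum_(c <- t) ceff c).

(* A schedule assigns to the k-th packet (k < d_sr) from s to r of coflow c
   its time slot sched c s r k; slot t >= 1 is the time interval [t-1, t]. *)
Definition schedule (J : job) := 'I_(mu J) -> 'I_(nserv J) -> 'I_(nserv J) -> nat -> nat.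

Definition feasible (J : job) (sched : schedule J) : Prop :=
  (forall c s r k, k < coflow J c s r -> 1 <= sched c s r k) /\
  (forall c c' s r r' k k', k < coflow J c s r -> k' < coflow J c' s r' ->
     (c, r, k) <> (c', r', k') -> sched c s r k <> sched c' s r' k') /\
  (forall c c' s s' r k k', k < coflow J c s r -> k' < coflow J c' s' r ->
     (c, s, k) <> (c', s', k') -> sched c s r k <> sched c' s' r k') /\
  (forall c1 c2, dep J c1 c2 ->
     forall s r k s' r' k', k < coflow J c1 s r -> k' < coflow J c2 s' r' ->
       sched c1 s r k < sched c2 s' r' k').

Definition makespan (J : job) (sched : schedule J) : nat :=
  \max_(c < mu J) \max_(s < nserv J) \max_(r < nserv J)
     \max_(k < coflow J c s r) sched c s r k.

(* Main.v *)
Require Import Defs.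
From mathcomp Require Import all_boot.
From Stdlib Require Import Reals.
From mathcomp Require Import zify.
From Stdlib Require Import Lia Lra Psatz.
Set Implicit Arguments. Unset Strict Implicit.

Lemma sum_split (F : nat -> nat) a k :
  \sum_(0 <= c < a * k) F c = \sum_(0 <= i < a) \sum_(0 <= j < k) F (i * k + j).
Proof.
elim: a => [|a IH]; first by rewrite mul0n !big_geq.
rewrite big_nat_recr //= -IH mulSnr (@big_cat_nat _ _ _ (a * k)) //=; last by rewrite leq_addr.
congr (_ + _); rewrite -{1}(add0n (a * k)) big_addn addKn; apply: eq_bigr => j _; by rewrite addnC.
Qed.

Lemma ind_nat n y : \sum_(0 <= i < n) ((i == y) : nat) = (y < n).
Proof.
elim: n => [|n IH]; first by rewrite big_geq.
rewrite big_nat_recr //= IH; case: (ltngtP y n) => H; rewrite ?ltnS; try lia.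
Qed.

Lemma ind_ord n y : \sum_(i < n) ((nat_of_ord i == y) : nat) <= 1.
Proof. by rewrite -(big_mkord xpredT (fun i => ((i == y) : nat))) ind_nat; case: (y < n). Qed.

Definition Jk (n : nat) : job :=
  Job n.+1 (n.+1 * n.+1)
    (fun c s r => (((s : nat) == c %/ n.+1) && ((r : nat) == c %% n.+1)) : nat)
    (fun c1 c2 => (c2 : nat) %/ n.+1 == ((c1 : nat) %/ n.+1).+1).

Lemma layer_lt n (c : 'I_(n.+1 * n.+1)) : c %/ n.+1 < n.+1.
Proof. by rewrite ltn_divLR // ltn_ord. Qed.

Definition sndr n (c : 'I_(n.+1 * n.+1)) : 'I_n.+1 := Ordinal (layer_lt c).
Definition rcvr n (c : 'I_(n.+1 * n.+1)) : 'I_n.+1 := Ordinal (ltn_pmod c (ltn0Sn n)).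

Lemma pkt n (c : 'I_(mu (Jk n))) : 0 < coflow (Jk n) c (sndr c) (rcvr c).
Proof. by rewrite /= !eqxx. Qed.

Lemma path_layer n (x : 'I_(n.+1 * n.+1)) p :
  path (dep (Jk n)) x p -> (last x p) %/ n.+1 = x %/ n.+1 + size p.
Proof.
elim: p x => [|y p IH] x /=; first by rewrite addn0.
move=> /andP [/eqP Hxy Hp]; by rewrite IH // Hxy addSn addnS.
Qed.

Lemma pigeon k (f : 'I_k -> nat) a : 0 < k -> injective f -> (forall j, a <= f j) ->
  exists j, a + k.-1 <= f j.
Proof.
move=> k0 inj ge.
case: (boolP [exists j, a + k.-1 <= f j]) => [/existsP//|/existsPn H].
exfalso.
have : size (map f (enum 'I_k)) <= size (iota a k.-1).
  apply: uniq_leq_size; first by rewrite map_inj_uniq // enum_uniq.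
  move=> x /mapP [j _ ->]; rewrite mem_iota ge /= ltnNge; exact: H.
rewrite size_map size_enum_ord size_iota; lia.
Qed.

Lemma ceff_le1 n (c : 'I_(mu (Jk n))) : ceff c <= 1.
Proof.
rewrite /ceff /eff_size geq_max; apply/andP; split; apply/bigmax_leqP => s _ /=.
- apply: leq_trans (ind_ord _ (c %% n.+1)); apply: leq_sum => r _; by case: (_ == _).
- apply: leq_trans (ind_ord _ (c %/ n.+1)); apply: leq_sum => r _; by case: (_ == _); case: (_ == _).
Qed.

Lemma T_le n : T_j (Jk n) <= n.+1.
Proof.
apply/bigmax_leqP => kk _; apply/bigmax_leqP => c0 _; apply/bigmax_leqP => t Hp.
have Hs : \sum_(c <- t) ceff c <= kk.
  apply: (@leq_trans (size t)); last by rewrite size_tuple.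
  rewrite -sum1_size; apply: leq_sum => c _; exact: ceff_le1.
have := path_layer Hp; have := layer_lt (last c0 t); rewrite size_tuple => H1 H2.
have := ceff_le1 c0. move: H1; rewrite H2 => H1 H3.
have : kk < n.+1 by apply: leq_trans H1; rewrite ltnS leq_addl.
move=> H4; apply: leq_trans (leq_add H3 Hs) _; exact: H4.
Qed.

Lemma row_cnt n (s : nat) : \sum_(c < n.+1 * n.+1) ((s == c %/ n.+1) : nat) <= n.+1.
Proof.
rewrite -(big_mkord xpredT (fun c => ((s == c %/ n.+1) : nat))) sum_split.
have E : forall i, \sum_(0 <= j < n.+1) ((s == (i * n.+1 + j) %/ n.+1) : nat) = n.+1 * (i == s).
  move=> i; rewrite (eq_big_nat _ _ (F2 := fun _ => ((i == s) : nat))) ?sum_nat_const_nat ?subn0 //.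
  move=> j /andP [_ Hj].
  by rewrite divnMDl // divn_small // addn0 eq_sym.
rewrite (eq_bigr _ (fun i _ => E i)) -big_distrr /= ind_nat.
by case: (s < n.+1); rewrite ?muln1 ?muln0.
Qed.

Lemma col_cnt n (r : nat) : \sum_(c < n.+1 * n.+1) ((r == c %% n.+1) : nat) <= n.+1.
Proof.
rewrite -(big_mkord xpredT (fun c => ((r == c %% n.+1) : nat))) sum_split.
have E : forall i, \sum_(0 <= j < n.+1) ((r == (i * n.+1 + j) %% n.+1) : nat) <= 1.
  move=> i; rewrite (eq_big_nat _ _ (F2 := fun j => ((j == r) : nat))) ?ind_nat; first by case: (r < n.+1).
  move=> j /andP [_ Hj].
  by rewrite modnMDl modn_small // eq_sym.
apply: (@leq_trans (\sum_(0 <= i < n.+1) 1)); first by apply: leq_sum => i _; exact: E.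
by rewrite sum_nat_const_nat subn0 muln1.
Qed.

Lemma Delta_le n : Delta_j (Jk n) <= n.+1.
Proof.
rewrite /Delta_j /eff_size geq_max; apply/andP; split; apply/bigmax_leqP => s _ /=.
- rewrite exchange_big /=; apply: leq_trans (row_cnt n s); apply: leq_sum => c _.
  case: (_ == _) => /=; last by rewrite big1.
  exact: ind_ord.
- rewrite exchange_big /=; apply: leq_trans (col_cnt n s); apply: leq_sum => c _.
  case: (_ == (_ %% _)) => /=; last by rewrite big1 // => i _; rewrite andbF.
  apply: leq_trans (ind_ord _ (c %/ n.+1)); apply: leq_sum => i _; by rewrite andbT.
Qed.

Lemma mk_lt n i j : i < n.+1 -> j < n.+1 -> i * n.+1 + j < n.+1 * n.+1.
Proof. move=> Hi Hj; nia. Qed.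

Lemma layers n (sched : schedule (Jk n)) : feasible sched ->
  forall i, i < n.+1 -> exists c : 'I_(mu (Jk n)),
    c %/ n.+1 = i /\ n.+1 * i.+1 <= sched c (sndr c) (rcvr c) 0.
Proof.
move=> [F1 [F2 [F3 F4]]].
have step : forall i (Hi : i < n.+1) L,
   (forall c : 'I_(mu (Jk n)), c %/ n.+1 = i -> L < sched c (sndr c) (rcvr c) 0) ->
   exists c : 'I_(mu (Jk n)), c %/ n.+1 = i /\ L + n.+1 <= sched c (sndr c) (rcvr c) 0.
  move=> i Hi L HL.
  pose cj := fun j : 'I_n.+1 => (Ordinal (mk_lt Hi (ltn_ord j)) : 'I_(mu (Jk n))).
  pose f := fun j : 'I_n.+1 => sched (cj j) (sndr (cj j)) (rcvr (cj j)) 0.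
  have Hlay : forall j : 'I_n.+1, (cj j) %/ n.+1 = i.
    by move=> j /=; rewrite divnMDl // divn_small // addn0.
  have inj : injective f.
    move=> j1 j2 Heq; apply/eqP; apply/negPn/negP => Hne.
    have Hs : sndr (cj j1) = sndr (cj j2) by apply: val_inj; rewrite /= !Hlay.
    apply: (F2 (cj j1) (cj j2) (sndr (cj j1)) (rcvr (cj j1)) (rcvr (cj j2)) 0 0).
    + exact: pkt.
    + rewrite Hs; exact: pkt.
    + move=> /(congr1 (fun x => val x.1.1)) /= /eqP; rewrite eqn_add2l => H.
      by move: Hne; rewrite -val_eqE /= H.
    + move: Heq; by rewrite /f Hs.
  have [j Hj] := pigeon (ltn0Sn n) inj (fun j => HL _ (Hlay j)).
  exists (cj j); split; first exact: Hlay.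
  by move: Hj; rewrite /= addSnnS.
elim => [|i IH] Hi.
- have [c [Hc Hv]] := step 0 Hi 0 (fun c _ => F1 c _ _ 0 (pkt c)).
  by exists c; split => //; rewrite muln1.
- have [c0 [Hc0 Hv0]] := IH (ltnW Hi).
  have Hdep : forall c : 'I_(mu (Jk n)), c %/ n.+1 = i.+1 -> dep (Jk n) c0 c.
    by move=> c Hc; rewrite /= Hc Hc0.
  have [c [Hc Hv]] := step i.+1 Hi (n.+1 * i.+1) (fun c Hc =>
     leq_ltn_trans Hv0 (F4 c0 c (Hdep c Hc) _ _ 0 _ _ 0 (pkt c0) (pkt c))).
  by exists c; split => //; rewrite mulnSr.
Qed.

Lemma v_le_makespan n (sched : schedule (Jk n)) (c : 'I_(mu (Jk n))) :
  sched c (sndr c) (rcvr c) 0 <= makespan sched.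
Proof.
rewrite /makespan.
apply: leq_trans _ (leq_bigmax c).
apply: leq_trans _ (leq_bigmax (sndr c)).
apply: leq_trans _ (leq_bigmax (rcvr c)).
exact: (leq_bigmax (F := fun kk : 'I_(coflow (Jk n) c (sndr c) (rcvr c)) =>
          sched c (sndr c) (rcvr c) kk) (Ordinal (pkt c))).
Qed.

Theorem lemma2 :
  exists kappa : R, (0 < kappa)%R /\
    forall N : nat, exists J : job,
      (N <= mu J)%N /\ is_dag J /\ coflows_nonempty J /\
      forall sched : schedule J, feasible sched ->
        (kappa * sqrt (INR (mu J)) * INR (Delta_j J + T_j J) <= INR (makespan sched))%R.
Proof.
exists (/ 2)%R; split; first lra.
move=> N; exists (Jk N); split; first by rewrite /=; nia.
split.
  move=> c1 c2 /= /eqP H; apply/negP => /connectP [p Hp Hl].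
  have := path_layer Hp; rewrite -Hl H => E.
  have : (c1 %/ N.+1).+1 <= c1 %/ N.+1 by rewrite {2}E leq_addr.
  by rewrite ltnn.
split.
  by move=> c; exists (sndr c), (rcvr c); exact: pkt.
move=> sched Hf.
have [c [_ Hc]] := layers Hf (ltnSn N).
have Hm := leq_trans Hc (v_le_makespan sched c).
have HD : (Delta_j (Jk N) + T_j (Jk N) <= 2 * N.+1)%N.
  by rewrite mul2n -addnn leq_add // ?Delta_le ?T_le.
move/leP/le_INR: Hm => Hm; move/leP/le_INR: HD => HD.
change (mu (Jk N)) with (N.+1 * N.+1).
have E1 : forall a b, INR (a * b) = (INR a * INR b)%R by move=> a b; exact: mult_INR.
rewrite E1 in Hm HD *; rewrite sqrt_square; last exact: pos_INR.
have := pos_INR N.+1.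
move=> HK. rewrite E1 in HD. replace (INR 2) with 2%R in HD by (simpl; lra). have := Rmult_le_compat_l _ _ _ HK HD. lra.
Qed.
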